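(* (i) The formal series $\Lambda(\lambda^{(0)},\nu^{(0)})$ and $\mathcal N(\lambda^{(0)},\nu^{(0)})$ (expanded in $\eta^{-1}$) coincide respectively with $\lambda^{(0)}(t,c-\eta^{-1},\eta)$ and $\nu^{(0)}(t,c-\eta^{-1},\eta)$, the 0-parameter solution of $(H_{\rm II})$ with $c$ replaced by $c-\eta^{-1}$ (re-expanded in $\eta^{-1}$, with the same leading term $\lambda_0(t,c)$). (ii) The formal solution $R$ satisfies $$R(t,c,\eta)-R(t,c-\eta^{-1},\eta)=-\frac{d}{dt}\log\Big\{1+\big(c-\tfrac12\eta^{-1}\big)\frac{\eta^{-1}R(t,c,\eta)-2\lambda^{(0)}(t,c,\eta)}{\big(\nu^{(0)}(t,c,\eta)-\lambda^{(0)}(t,c,\eta)^2-\frac12t\big)^2}\Big\},$$ where $R(t,c-\eta^{-1},\eta)$ is the corresponding formal Riccati solution for the parameter $c-\eta^{-1}$ (re-expanded in $\eta^{-1}$).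
   Context: Let $\eta$ be a large parameter, $c\in\mathbb C\setminus\{0\}$. $(H_{\rm II})$: $\frac{d\lambda}{dt}=\eta\nu$, $\frac{d\nu}{dt}=\eta(2\lambda^3+t\lambda+c)$. Let $\lambda_0(t,c)$ be a branch of the algebraic function $2\lambda_0^3+t\lambda_0+c=0$. The 0-parameter solution is the unique pair of formal power series $\lambda^{(0)}=\sum_{k\ge0}\eta^{-k}\lambda^{(0)}_k(t,c)$, $\nu^{(0)}=\sum_{k\ge0}\eta^{-k}\nu^{(0)}_k(t,c)$ solving $(H_{\rm II})$ formally with $\lambda^{(0)}_0=\lambda_0$, $\nu^{(0)}_0=0$. Set $\Delta=6\lambda_0^2+t$. Let $R=\sum_{k\ge-1}\eta^{-k}R_k$ be the formal solution of $R^2+\frac{dR}{dt}=\eta^2(6(\lambda^{(0)})^2+t)$ with $R_{-1}=\sqrt\Delta$ (fixed branch). The Bäcklund transformation is $\Lambda(\lambda,\nu)=-\lambda+\frac{c-\frac12\eta^{-1}}{\nu-\lambda^2-\frac12t}$, $\mathcal N(\lambda,\nu)=-\nu+\frac{2(c-\frac12\eta^{-1})\lambda}{\nu-\lambda^2-\frac12t}-\Big(\frac{c-\frac12\eta^{-1}}{\nu-\lambda^2-\frac12t}\Big)^2$; it maps solutions of $(H_{\rm II})$ to solutions of the same system with $c$ replaced by $c-\eta^{-1}$. *)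

(* Defs.v *)
(* Formal power series in eps = eta^{-1} with coefficients in
   an abstract differential field K (a field of "functions of (t,c)") equipped
   with the two commuting derivations d/dt and d/dc. *)
From HB Require Import structures.
From mathcomp Require Import all_boot all_order all_algebra.
Set Implicit Arguments. Unset Strict Implicit. Unset Printing Implicit Defensive.
Import Order.TTheory GRing.Theory Num.Theory.
Local Open Scope ring_scope.

Definition is_derivation (K : fieldType) (D : K -> K) : Prop :=
  (forall x y, D (x + y) = D x + D y) /\ (forall x y, D (x * y) = D x * y + x * D y).

Definition fps (K : fieldType) := nat -> K.

Section FPS.
Variable K : fieldType.

Definition feq (f g : fps K) : Prop := forall n, f n = g n.

Definition fC (a : K) : fps K := fun n => if n is 0 then a else 0.
Definition feps : fps K := fun n => if n == 1%N then 1 else 0.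
Definition fadd (f g : fps K) : fps K := fun n => f n + g n.
Definition fopp (f : fps K) : fps K := fun n => - f n.
Definition fsub (f g : fps K) : fps K := fun n => f n - g n.
Definition fmul (f g : fps K) : fps K :=
  fun n => \sum_(i < n.+1) f i * g (n - i)%N.
Definition fder (D : K -> K) (f : fps K) : fps K := fun n => D (f n).

(* multiplicative inverse of a series (meaningful when f 0 != 0):
   g 0 = (f 0)^-1,  g n = - (f 0)^-1 * sum_(i<n) f (n-i) * g i *)
Fixpoint finv_seq (f : fps K) (n : nat) : seq K :=
  match n with
  | 0 => [:: (f 0%N)^-1]
  | m.+1 => let s := finv_seq f m in
            rcons s (- (f 0%N)^-1 * \sum_(i < m.+1) f (m.+1 - i)%N * nth 0 s i)
  end.
Definition finv (f : fps K) : fps K := fun n => nth 0 (finv_seq f n) n.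

(* re-expansion of f(t, c - eps) in powers of eps, where Dc = d/dc:
   sum_k eps^k f_k(t, c - eps) = sum_k eps^k sum_j (-eps)^j/j! Dc^j f_k *)
Definition fshift (Dc : K -> K) (f : fps K) : fps K :=
  fun n => \sum_(k < n.+1)
     ((-1) ^+ (n - k)%N / ((n - k)`!)%:R) * iter (n - k)%N Dc (f k).

Definition Qden (t : K) (lam nu : fps K) : fps K :=
  fsub (fsub nu (fmul lam lam)) (fC (t / 2%:R)).
Definition chalf (c : K) : fps K := fsub (fC c) (fmul (fC (2%:R^-1)) feps).

Definition BLam (t c : K) (lam nu : fps K) : fps K :=
  fadd (fopp lam) (fmul (chalf c) (finv (Qden t lam nu))).
Definition BNu (t c : K) (lam nu : fps K) : fps K :=
  let w := fmul (chalf c) (finv (Qden t lam nu)) in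
  fsub (fadd (fopp nu) (fmul (fC 2%:R) (fmul w lam))) (fmul w w).

(* the argument of the log in (ii), with S = eta^{-1} R *)
Definition Farg (t c : K) (lam nu S : fps K) : fps K :=
  fadd (fC 1) (fmul (chalf c)
     (fmul (fsub S (fmul (fC 2%:R) lam))
           (finv (fmul (Qden t lam nu) (Qden t lam nu))))).

Definition fdlog (Dt : K -> K) (F : fps K) : fps K := fmul (fder Dt F) (finv F).

End FPS.

(* Main.v *)
Require Import Defs.
From HB Require Import structures.
From mathcomp Require Import all_boot all_order all_algebra.
From mathcomp Require Import boolp.
From mathcomp Require Import ring.
Set Implicit Arguments. Unset Strict Implicit. Unset Printing Implicit Defensive.
Import Order.TTheory GRing.Theory Num.Theory.
Local Open Scope ring_scope.
Local Notation finv := Defs.finv.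

HB.instance Definition _ (K : fieldType) := Choice.copy (fps K) (nat -> K).

Section Ring.
Variable K : fieldType.
Implicit Types f g h : fps K.

Lemma fext f g : (forall n, f n = g n) -> f = g.
Proof. by move=> H; apply: funext. Qed.

Definition pt (N : nat) f : {poly K} := \poly_(i < N) f i.

Lemma fmulE N f g n : (n < N)%N -> fmul f g n = (pt N f * pt N g)`_n.
Proof.
move=> lt; rewrite coefM /fmul; apply: eq_bigr => i _.
rewrite !coef_poly (leq_ltn_trans (ltnSE (ltn_ord i)) lt).
by rewrite (leq_ltn_trans (leq_subr _ _) lt).
Qed.

Lemma fmulA : associative (@fmul K).
Proof.
move=> f g h; apply: fext => n.
rewrite (fmulE _ _ (ltnSn n)) [RHS](fmulE _ _ (ltnSn n)).
have E1 : (pt n.+1 (fmul f g) * pt n.+1 h)`_n = (pt n.+1 f * pt n.+1 g * pt n.+1 h)`_n.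
  rewrite !coefM; apply: eq_bigr => i _; congr (_ * _).
  rewrite coef_poly (ltn_ord i); exact: fmulE.
have E2 : (pt n.+1 f * pt n.+1 (fmul g h))`_n = (pt n.+1 f * (pt n.+1 g * pt n.+1 h))`_n.
  rewrite !coefM; apply: eq_bigr => i _; congr (_ * _).
  have lt : (n - i < n.+1)%N by rewrite ltnS leq_subr.
  rewrite coef_poly lt; exact: fmulE.
by rewrite E1 E2 mulrA.
Qed.

Lemma fmulC : commutative (@fmul K).
Proof.
move=> f g; apply: fext => n.
by rewrite (fmulE _ _ (ltnSn n)) [RHS](fmulE _ _ (ltnSn n)) mulrC.
Qed.

Lemma fmul1 : left_id (fC 1) (@fmul K).
Proof.
move=> f; apply: fext => n; rewrite /fmul big_ord_recl /= mul1r subn0 big1 ?addr0 //.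
by move=> i _; rewrite mul0r.
Qed.

Lemma fmulDl : left_distributive (@fmul K) (@fadd K).
Proof.
move=> f g h; apply: fext => n; rewrite /fmul /fadd -big_split /=.
by apply: eq_bigr => i _; rewrite mulrDl.
Qed.

Lemma faddA : associative (@fadd K).
Proof. by move=> f g h; apply: fext => n; rewrite /fadd addrA. Qed.
Lemma faddC : commutative (@fadd K).
Proof. by move=> f g; apply: fext => n; rewrite /fadd addrC. Qed.
Lemma fadd0 : left_id (fC 0) (@fadd K).
Proof. by move=> f; apply: fext => n; rewrite /fadd /fC; case: n => *; rewrite add0r. Qed.
Lemma faddN : left_inverse (fC 0) (@fopp K) (@fadd K).
Proof. by move=> f; apply: fext => n; rewrite /fadd /fopp /fC addNr; case: n. Qed.
Lemma foner_neq0 : fC (1 : K) != fC 0.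
Proof. by apply/eqP => /(congr1 (fun f => f 0%N)) /= /eqP; rewrite oner_eq0. Qed.
End Ring.

HB.instance Definition _ (K : fieldType) :=
  GRing.isZmodule.Build (fps K) (@faddA K) (@faddC K) (@fadd0 K) (@faddN K).
HB.instance Definition _ (K : fieldType) :=
  GRing.Zmodule_isComNzRing.Build (fps K) (@fmulA K) (@fmulC K) (@fmul1 K)
    (@fmulDl K) (@foner_neq0 K).


Section Basic.
Variable K : fieldType.
Implicit Types f g h : fps K.
Implicit Types a b : K.

Lemma faddE f g : fadd f g = f + g. Proof. by []. Qed.
Lemma foppE f : fopp f = - f. Proof. by []. Qed.
Lemma fsubE f g : fsub f g = f - g. Proof. by []. Qed.
Lemma fmulE' f g : fmul f g = f * g. Proof. by []. Qed.
Lemma fC0 : fC 0 = 0 :> fps K. Proof. by []. Qed.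
Lemma fC1 : fC 1 = 1 :> fps K. Proof. by []. Qed.
Lemma addfE f g n : (f + g) n = f n + g n. Proof. by []. Qed.
Lemma oppfE f n : (- f) n = - f n. Proof. by []. Qed.
Lemma subfE f g n : (f - g) n = f n - g n. Proof. by []. Qed.
Lemma mulfE f g n : (f * g) n = \sum_(i < n.+1) f i * g (n - i)%N. Proof. by []. Qed.
Lemma zerofE n : (0 : fps K) n = 0. Proof. by case: n. Qed.
Lemma mulf0E f g : (f * g) 0%N = f 0%N * g 0%N.
Proof. by rewrite mulfE big_ord1. Qed.

Lemma fCD a b : fC (a + b) = fC a + fC b.
Proof. by apply: fext => -[|n]; rewrite addfE //= addr0. Qed.
Lemma fCN a : fC (- a) = - fC a.
Proof. by apply: fext => -[|n]; rewrite oppfE //= oppr0. Qed.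
Lemma fCB a b : fC (a - b) = fC a - fC b.
Proof. by rewrite fCD fCN. Qed.
Lemma fCM a b : fC (a * b) = fC a * fC b.
Proof.
apply: fext => n; rewrite mulfE big_ord_recl subn0 big1 ?addr0.
  by case: n => [|n] //=; rewrite mulr0.
by move=> i _; rewrite /= mul0r.
Qed.
Lemma fCn m : fC (m%:R) = m%:R :> fps K.
Proof. by elim: m => [//|m IH]; rewrite -addn1 !natrD fCD IH fC1. Qed.

Lemma epsE0 f : (feps K * f) 0%N = 0.
Proof. by rewrite mulf0E /= mul0r. Qed.
Lemma epsES f n : (feps K * f) n.+1 = f n.
Proof.
rewrite mulfE big_ord_recl /= mul0r add0r big_ord_recl /= mul1r subSS subn0.
by rewrite big1 ?addr0 // => i _; rewrite /feps /= mul0r.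
Qed.

Lemma size_finv f n : size (finv_seq f n) = n.+1.
Proof. by elim: n => [//|n IH] /=; rewrite size_rcons IH. Qed.
Lemma finv_pref f n i : (i <= n)%N -> nth 0 (finv_seq f n) i = finv f i.
Proof.
elim: n => [|n IH]; first by rewrite leqn0 => /eqP ->.
rewrite leq_eqVlt => /orP [/eqP -> //|]; rewrite ltnS => lt.
by rewrite /= nth_rcons size_finv ltnS lt IH.
Qed.
Lemma finvS f m : finv f m.+1 =
  - (f 0%N)^-1 * \sum_(i < m.+1) f (m.+1 - i)%N * finv f i.
Proof.
rewrite /finv /= nth_rcons size_finv ltnn eqxx; congr (_ * _).
by apply: eq_bigr => i _; rewrite finv_pref // -ltnS.
Qed.
Lemma finv0 f : finv f 0%N = (f 0%N)^-1. Proof. by []. Qed.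
Lemma finvK f : f 0%N != 0 -> f * finv f = 1.
Proof.
move=> nz; apply: fext => -[|m]; first by rewrite mulf0E finv0 mulfV.
rewrite mulrC mulfE big_ord_recr /= subnn finvS /=.
rewrite mulrAC mulNr mulVf // mulN1r addrC.
have -> : (1 : fps K) m.+1 = 0 by [].
rewrite addrC; apply/eqP; rewrite subr_eq0; apply/eqP.
by apply: eq_bigr => i _; rewrite mulrC.
Qed.
Lemma finv_uniq f g : f * g = 1 -> finv f = g.
Proof.
move=> fg; have nz : f 0%N != 0.
  apply/eqP => f0; have := congr1 (fun h => h 0%N) fg.
  by rewrite mulf0E f0 mul0r /= => /esym/eqP; rewrite oner_eq0.
by rewrite -[finv f]mulr1 -fg mulrA [finv f * f]mulrC finvK // mul1r.
Qed.
End Basic.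

Section Deriv.
Variable K : fieldType.
Variable D : K -> K.
Hypothesis hD : is_derivation D.
Implicit Types f g h : fps K.

Lemma D0 : D 0 = 0.
Proof. have H := (proj1 hD) 0 0; rewrite addr0 in H. by apply: (addrI (D 0)); rewrite addr0 -H. Qed.
Lemma DD x y : D (x + y) = D x + D y. Proof. exact: (proj1 hD). Qed.
Lemma DM x y : D (x * y) = D x * y + x * D y. Proof. exact: (proj2 hD). Qed.
Lemma DN x : D (- x) = - D x.
Proof. by apply/eqP; rewrite -subr_eq0 opprK -DD addNr D0. Qed.
Lemma DB x y : D (x - y) = D x - D y. Proof. by rewrite DD DN. Qed.
Lemma D1 : D 1 = 0.
Proof. have H := DM 1 1; rewrite !mul1r mulr1 in H. by apply: (addrI (D 1)); rewrite addr0 -H. Qed.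
Lemma Dn m : D m%:R = 0.
Proof. by elim: m => [|m IH]; rewrite ?D0 // -addn1 natrD DD IH D1 addr0. Qed.
Lemma Dinv0 x : x != 0 -> D x = 0 -> D x^-1 = 0.
Proof.
move=> nz Dx; have := DM x x^-1; rewrite mulfV // D1 Dx mul0r add0r => /esym/eqP.
by rewrite mulf_eq0 (negbTE nz) => /eqP.
Qed.
Lemma Dsum (I : Type) (r : seq I) (P : pred I) (F : I -> K) :
  D (\sum_(i <- r | P i) F i) = \sum_(i <- r | P i) D (F i).
Proof. exact: (big_morph D DD D0). Qed.
Lemma fderD f g : fder D (f + g) = fder D f + fder D g.
Proof. by apply: fext => n; rewrite /fder addfE DD. Qed.
Lemma fderN f : fder D (- f) = - fder D f.
Proof. by apply: fext => n; rewrite /fder oppfE DN. Qed.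
Lemma fderB f g : fder D (f - g) = fder D f - fder D g.
Proof. by rewrite fderD fderN. Qed.
Lemma fderM f g : fder D (f * g) = fder D f * g + f * fder D g.
Proof.
apply: fext => n; rewrite /fder addfE !mulfE Dsum -big_split /=.
by apply: eq_bigr => i _; rewrite DM.
Qed.
Lemma fderC a : fder D (fC a) = fC (D a).
Proof. by apply: fext => -[|n] //=; rewrite /fder /= D0. Qed.
Lemma fder1 : fder D 1 = 0.
Proof. by rewrite -fC1 fderC D1. Qed.
Lemma fdern m : fder D m%:R = 0.
Proof. by rewrite -fCn fderC Dn. Qed.
Lemma fdereps : fder D (feps K) = 0.
Proof. by apply: fext => n; rewrite /fder /feps zerofE; case: (n == 1)%N; rewrite ?D1 ?D0. Qed.
End Deriv.


Section Uniq.
Variable K : fieldType.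
Implicit Types f g d X : fps K.

Lemma uniq0 d X : X 0%N != 0 -> d 0%N = 0 ->
  (forall n, (forall k, (k <= n)%N -> d k = 0) -> (d * X) n.+1 = 0) -> d = 0.
Proof.
move=> X0 d0 H; suff S : forall n k, (k <= n)%N -> d k = 0.
  by apply: fext => n; rewrite zerofE (S n).
elim=> [|n IH] k; first by rewrite leqn0 => /eqP ->.
rewrite leq_eqVlt => /orP [/eqP ->|]; last by rewrite ltnS; apply: IH.
have := H n IH; rewrite mulfE big_ord_recr /= subnn big1 ?add0r.
  by move/eqP; rewrite mulf_eq0 (negbTE X0) orbF => /eqP.
by move=> i _; rewrite IH ?mul0r // -ltnS.
Qed.

Definition fdeps f : fps K := fun n => f n.+1 *+ n.+1.

Lemma wsplit (A : nat -> K) n : (\sum_(i < n.+2) A i) * n.+1%:R =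
  \sum_(j < n.+1) A j.+1 * j.+1%:R + \sum_(i < n.+1) A i * (n.+1 - i)%:R.
Proof.
rewrite mulr_suml (eq_bigr (fun i : 'I_n.+2 => A i * i%:R + A i * (n.+1 - i)%:R)).
  rewrite big_split /= big_ord_recl mulr0 add0r; congr (_ + _).
  by rewrite big_ord_recr /= subnn mulr0 addr0.
by move=> i _; rewrite -mulrDr -natrD subnKC // -ltnS.
Qed.

Lemma fdepsD f g : fdeps (f + g) = fdeps f + fdeps g.
Proof. by apply: fext => n; rewrite /fdeps !addfE mulrnDl. Qed.
Lemma fdepsM f g : fdeps (f * g) = fdeps f * g + f * fdeps g.
Proof.
apply: fext => n; rewrite /fdeps addfE !mulfE -mulr_natr (wsplit (fun i => f i * g (n.+1 - i)%N)) /=; congr (_ + _).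
  by apply: eq_bigr => i _; rewrite subSS mulr_natr mulrnAl.
apply: eq_bigr => i _; rewrite mulr_natr -mulrnAr.
by have -> : (n.+1 - i = (n - i).+1)%N by rewrite subSn // -ltnS.
Qed.
End Uniq.

Section Shift.
Variable K : fieldType.
Variable Dc : K -> K.
Hypothesis hD : is_derivation Dc.
Hypothesis ch0 : [pchar K] =i pred0.
Implicit Types f g : fps K.

Lemma natr_neq0 m : (m.+1%:R : K) != 0.
Proof. by have /pcharf0P -> := ch0. Qed.
Lemma fact_neq0 m : ((m`!)%:R : K) != 0.
Proof. by have /pcharf0P -> := ch0; rewrite -lt0n fact_gt0. Qed.

Definition sc m : K := (-1) ^+ m / (m`!)%:R.
Definition T m x := sc m * iter m Dc x.

Lemma fshiftE f n : fshift Dc f n = \sum_(k < n.+1) T (n - k) (f k).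
Proof. by []. Qed.

Lemma Dsc m : Dc (sc m) = 0.
Proof.
rewrite /sc (DM hD) (Dinv0 hD (fact_neq0 m) (Dn hD _)) mulr0 addr0.
suff -> : Dc ((-1) ^+ m) = 0 by rewrite mul0r.
elim: m => [|m IH]; first by rewrite expr0 (D1 hD).
by rewrite exprS (DM hD) IH (DN hD) (D1 hD) oppr0 !mul0r mulr0 addr0.
Qed.

Lemma scS m : sc m.+1 *+ m.+1 = - sc m.
Proof.
rewrite /sc -mulr_natr factS natrM exprS.
have h1 := natr_neq0 m; have h2 := fact_neq0 m.
by field; rewrite h2 addrC natr1 h1.
Qed.

Lemma TS m x : T m.+1 x *+ m.+1 = - Dc (T m x).
Proof. by rewrite /T -mulrnAl scS (DM hD) Dsc mul0r add0r iterS mulNr. Qed.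

Lemma iterD m x y : iter m Dc (x + y) = iter m Dc x + iter m Dc y.
Proof. by elim: m => [//|m IH]; rewrite !iterS IH (DD hD). Qed.
Lemma iter0 m : iter m Dc 0 = 0.
Proof. by elim: m => [//|m IH]; rewrite iterS IH (D0 hD). Qed.
Lemma iterMn m x k : iter m Dc (x *+ k) = iter m Dc x *+ k.
Proof. by elim: k => [|k IH]; rewrite ?mulr0n ?iter0 // !mulrS iterD IH. Qed.
Lemma TD m x y : T m (x + y) = T m x + T m y.
Proof. by rewrite /T iterD mulrDr. Qed.
Lemma TMn m x k : T m (x *+ k) = T m x *+ k.
Proof. by rewrite /T iterMn mulrnAr. Qed.

Lemma fshiftD f g : fshift Dc (f + g) = fshift Dc f + fshift Dc g.
Proof. by apply: fext => n; rewrite addfE !fshiftE -big_split; apply: eq_bigr => i _; rewrite TD. Qed.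

Lemma fshift0E f : fshift Dc f 0%N = f 0%N.
Proof. by rewrite fshiftE big_ord1 /T /sc /= expr0 divr1 mul1r. Qed.

Lemma fshift_deps f n :
  fshift Dc f n.+1 * n.+1%:R = fshift Dc (fdeps f) n - Dc (fshift Dc f n).
Proof.
have E1 : \sum_(j < n.+1) T (n.+1 - j.+1) (f j.+1) * j.+1%:R = fshift Dc (fdeps f) n.
  Timeout 5 rewrite fshiftE. Timeout 5 apply: eq_bigr => i _. Timeout 5 by rewrite subSS /fdeps TMn mulr_natr.
have E2 : \sum_(i < n.+1) T (n.+1 - i) (f i) * (n.+1 - i)%:R = - Dc (fshift Dc f n).
  Timeout 5 rewrite fshiftE (Dsum hD) -sumrN. Timeout 5 apply: eq_bigr => i _.
  rewrite subSn; last by rewrite -ltnS. Timeout 5 by rewrite mulr_natr TS.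
Timeout 5 by rewrite [fshift Dc f n.+1]fshiftE (wsplit (fun k => T (n.+1 - k) (f k))) E1 E2.
Qed.
Lemma fshiftM f g : fshift Dc (f * g) = fshift Dc f * fshift Dc g.
Proof.
suff S : forall n f g, fshift Dc (f * g) n = (fshift Dc f * fshift Dc g) n.
  by apply: fext => n; apply: S.
elim=> [|n IH] {}f {}g; first by rewrite fshift0E !mulf0E !fshift0E.
apply: (mulIf (natr_neq0 n)).
rewrite fshift_deps fdepsM fshiftD addfE !IH.
have HF : forall h, fshift Dc (fdeps h) = fdeps (fshift Dc h) + fder Dc (fshift Dc h).
  move=> h; apply: fext => k; rewrite addfE [fdeps (fshift Dc h) k]/fdeps -mulr_natr.
  by rewrite fshift_deps /fder subrK.
rewrite !HF.
have -> : Dc ((fshift Dc f * fshift Dc g) n) = fder Dc (fshift Dc f * fshift Dc g) n by [].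
have -> : (fshift Dc f * fshift Dc g) n.+1 * n.+1%:R = fdeps (fshift Dc f * fshift Dc g) n.
  by rewrite mulr_natr.
rewrite (fderM hD) fdepsM -!addfE -subfE; apply: (congr1 (fun h : fps K => h n)); ring.
Qed.
End Shift.


Section Core.
Variable R : comNzRingType.
Variable D : R -> R.
Hypothesis DsD : forall x y, D (x + y) = D x + D y.
Hypothesis DsM : forall x y, D (x * y) = D x * y + x * D y.

Lemma Ds0 : D 0 = 0.
Proof. have H := DsD 0 0; rewrite addr0 in H. by apply: (addrI (D 0)); rewrite addr0 -H. Qed.
Lemma DsN x : D (- x) = - D x.
Proof. by apply/eqP; rewrite -subr_eq0 opprK -DsD addNr Ds0. Qed.
Lemma DsB x y : D (x - y) = D x - D y. Proof. by rewrite DsD DsN. Qed.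
Lemma Ds1 : D 1 = 0.
Proof. have H := DsM 1 1; rewrite !mul1r mulr1 in H. by apply: (addrI (D 1)); rewrite addr0 -H. Qed.
Lemma Dsn m : D m%:R = 0.
Proof. by elim: m => [|m IH]; rewrite ?Ds0 // -addn1 natrD DsD IH Ds1 addr0. Qed.

Variables lam nu q S T2 h E2 : R.
Hypothesis Dlam : D lam = nu.
Hypothesis Dnu : D nu = 2%:R * (lam * (lam * lam)) + (2%:R * T2 * lam + (h + E2)).
Hypothesis DT2 : D T2 = E2.
Hypothesis Dh : D h = 0.
Hypothesis DE2 : D E2 = 0.
Hypothesis hq : q * (nu - lam * lam - T2) = 1.

Lemma Dq : D q = 2%:R * lam * q - h * (q * q).
Proof.
have h0 : D q * (nu - lam * lam - T2) + q * D (nu - lam * lam - T2) = 0.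
  by rewrite -DsM hq Ds1.
rewrite !DsB DsM Dlam Dnu DT2 in h0.
apply/eqP; rewrite -subr_eq0; apply/eqP.
transitivity ((D q * (nu - lam * lam - T2) + q * (2%:R * (lam * (lam * lam)) +
  (2%:R * T2 * lam + (h + E2)) - (nu * lam + lam * nu) - E2)) * q
  - (D q - 2%:R * lam * q) * (q * (nu - lam * lam - T2) - 1)); first by ring.
by rewrite h0 hq; ring.
Qed.

Ltac dsimp := rewrite ?(DsD, DsB, DsN, DsM, Ds0, Ds1, Dsn, Dlam, Dnu, DT2, Dh, DE2, Dq).

Lemma B1 : D (- lam + h * q) = - nu + 2%:R * ((h * q) * lam) - (h * q) * (h * q).
Proof. dsimp; ring. Qed.

Lemma B2 : D (- nu + 2%:R * ((h * q) * lam) - (h * q) * (h * q)) =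
  2%:R * ((- lam + h * q) * ((- lam + h * q) * (- lam + h * q))) +
  (2%:R * T2 * (- lam + h * q) + (h - E2)).
Proof.
dsimp; apply/eqP; rewrite -subr_eq0; apply/eqP.
transitivity ((q * (nu - lam * lam - T2) - 1) * (2%:R * h)); first by ring.
by rewrite hq; ring.
Qed.

Variable DS : D S = 6%:R * (lam * lam) + 2%:R * T2 - S * S.

Lemma Kid : 2%:R * S * D (1 + h * ((S - 2%:R * lam) * (q * q))) +
   D (D (1 + h * ((S - 2%:R * lam) * (q * q)))) =
   6%:R * ((- lam + h * q) * (- lam + h * q) - lam * lam) *
      (1 + h * ((S - 2%:R * lam) * (q * q))).
Proof.
rewrite ?(DsD, DsB, DsN, DsM, Ds0, Ds1, Dsn, Dlam, Dnu, DT2, Dh, DE2, Dq, DS).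
apply/eqP; rewrite -subr_eq0; apply/eqP.
transitivity ((q * (nu - lam * lam - T2) - 1) *
   ((-12%:R)*lam*q*h + 8%:R*q^+2*h^+2)); first by ring.
by rewrite hq; ring.
Qed.
End Core.


Section Shift2.
Variable K : fieldType.
Variables Dt Dc : K -> K.
Hypothesis hDt : is_derivation Dt.
Hypothesis hDc : is_derivation Dc.
Hypothesis comm : forall x, Dt (Dc x) = Dc (Dt x).
Hypothesis ch0 : [pchar K] =i pred0.
Implicit Types f g : fps K.

Lemma fshiftC a : fshift Dc (fC a) = fun n => T Dc n a.
Proof.
apply: fext => n; rewrite fshiftE big_ord_recl subn0 big1 ?addr0 //.
by move=> i _; rewrite /= /T (iter0 hDc) mulr0.
Qed.

Lemma iter_const m a : Dc a = 0 -> iter m.+1 Dc a = 0.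
Proof. by move=> h; rewrite iterSr h (iter0 hDc). Qed.

Lemma fshiftC0 a : Dc a = 0 -> fshift Dc (fC a) = fC a.
Proof.
move=> h; rewrite fshiftC; apply: fext => -[|n].
  by rewrite /T /sc /= expr0 divr1 mul1r.
by rewrite /T iter_const // mulr0.
Qed.

Lemma fshiftCc a : Dc a = 1 -> fshift Dc (fC a) = fC a - feps K.
Proof.
move=> h; rewrite fshiftC; apply: fext => -[|[|n]]; rewrite subfE.
- by rewrite /T /sc /= expr0 divr1 mul1r subr0.
- by rewrite /T /sc /= h expr1 divr1 mulr1 add0r.
- by rewrite /T iterSr h iter_const ?(D1 hDc) // mulr0 /= subrr.
Qed.

Lemma fshift1 : fshift Dc 1 = 1.
Proof. by rewrite -fC1 fshiftC0 // (D1 hDc). Qed.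
Lemma fshiftn m : fshift Dc m%:R = m%:R.
Proof. by rewrite -fCn fshiftC0 // (Dn hDc). Qed.

Lemma fshifteps : fshift Dc (feps K) = feps K.
Proof.
apply: fext => -[|[|n]]; rewrite fshiftE.
- by rewrite big_ord1 /T /feps /= mulr0.
- rewrite big_ord_recr big_ord1 /T /sc /feps /= (D0 hDc) mulr0 add0r.
  by rewrite subnn fact0 mulr1n invr1 expr0 !mulr1.
- rewrite big1 // => i _; rewrite /T /feps.
  case: eqP => [i1|]; last by rewrite (iter0 hDc) mulr0.
  by rewrite i1 subSS subn0 iter_const ?(D1 hDc) // mulr0.
Qed.

Lemma fshiftN f : fshift Dc (- f) = - fshift Dc f.
Proof.
apply/eqP; rewrite -subr_eq0 opprK -(fshiftD hDc) addNr; apply/eqP.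
by apply: fext => n; rewrite fshiftE zerofE big1 // => i _; rewrite zerofE /T (iter0 hDc) mulr0.
Qed.
Lemma fshiftB f g : fshift Dc (f - g) = fshift Dc f - fshift Dc g.
Proof. by rewrite (fshiftD hDc) fshiftN. Qed.

Lemma Dtsc m : Dt (sc K m) = 0.
Proof.
rewrite /sc (DM hDt) (Dinv0 hDt (fact_neq0 ch0 m) (Dn hDt _)) mulr0 addr0.
suff -> : Dt ((-1) ^+ m) = 0 by rewrite mul0r.
elim: m => [|m IH]; first by rewrite expr0 (D1 hDt).
by rewrite exprS (DM hDt) IH (DN hDt) (D1 hDt) oppr0 !mul0r mulr0 addr0.
Qed.

Lemma iter_comm m x : Dt (iter m Dc x) = iter m Dc (Dt x).
Proof. by elim: m => [//|m IH]; rewrite !iterS comm IH. Qed.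

Lemma fshift_fder f : fshift Dc (fder Dt f) = fder Dt (fshift Dc f).
Proof.
apply: fext => n; rewrite /fder !fshiftE (Dsum hDt); apply: eq_bigr => i _.
by rewrite /T (DM hDt) Dtsc mul0r add0r iter_comm.
Qed.
End Shift2.


Lemma natf0E (K : fieldType) m : (m%:R : fps K) 0%N = m%:R.
Proof. by rewrite -fCn. Qed.
Lemma DD0 (K : fieldType) (Dt : K -> K) (hDt : is_derivation Dt) (g : fps K) n :
  (forall k, (k <= n)%N -> g k = 0) ->
  (feps K * fder Dt (feps K * fder Dt g)) n.+1 = 0.
Proof.
move=> H; rewrite epsES /fder; case: n H => [|m] H; first by rewrite epsE0 (D0 hDt).
by rewrite epsES /fder H // (D0 hDt) (D0 hDt).
Qed.
Lemma D0' (K : fieldType) (Dt : K -> K) (hDt : is_derivation Dt) (g : fps K) n :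
  (forall k, (k <= n)%N -> g k = 0) -> (feps K * fder Dt g) n.+1 = 0.
Proof. by move=> H; rewrite epsES /fder H // (D0 hDt). Qed.

Lemma feq_of_eq (K : fieldType) (f g : fps K) : f = g -> feq f g.
Proof. by move->. Qed.

Theorem mainTheorem5 (K : fieldType) (Dt Dc : K -> K) (t c : K)
    (lam nu S : fps K) :
  [pchar K] =i pred0 ->
  is_derivation Dt -> is_derivation Dc ->
  (forall x, Dt (Dc x) = Dc (Dt x)) ->
  Dt t = 1 -> Dc t = 0 -> Dt c = 0 -> Dc c = 1 ->
  c != 0 ->
  2%:R * lam 0%N ^+ 3 + t * lam 0%N + c = 0 ->
  nu 0%N = 0 ->
  feq (fmul (feps K) (fder Dt lam)) nu ->
  feq (fmul (feps K) (fder Dt nu))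
      (fadd (fmul (fC 2%:R) (fmul lam (fmul lam lam)))
            (fadd (fmul (fC t) lam) (fC c))) ->
  S 0%N ^+ 2 = 6%:R * lam 0%N ^+ 2 + t ->
  feq (fadd (fmul S S) (fmul (feps K) (fder Dt S)))
      (fadd (fmul (fC 6%:R) (fmul lam lam)) (fC t)) ->
  (feq (BLam t c lam nu) (fshift Dc lam) /\
   feq (BNu t c lam nu) (fshift Dc nu)) /\
  feq (fsub S (fshift Dc S))
      (fopp (fmul (feps K) (fdlog Dt (Farg t c lam nu S)))).
Proof.
move=> ch0 hDt hDc comm Dtt Dct Dtc Dcc c0 cub nu0 H1 H2 S0sq HR.
have E1 : feps K * fder Dt lam = nu := fext H1.
have E2 : feps K * fder Dt nu = fC 2%:R * (lam * (lam * lam)) + (fC t * lam + fC c)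
  := fext H2.
have ER : S * S + feps K * fder Dt S = fC 6%:R * (lam * lam) + fC t := fext HR.
rewrite !fCn in E2 ER.
set l0 := lam 0%N in cub S0sq *.
have l0E : lam 0%N = l0 by [].
clearbody l0.
have two_nz : (2%:R : K) != 0 := natr_neq0 ch0 1.
have hc : c = - (2%:R * l0 ^+ 3 + t * l0).
  by apply: (addrI (2%:R * l0 ^+ 3 + t * l0)); rewrite cub addrN.
have Delta_nz : 6%:R * l0 ^+ 2 + t != 0.
  have H := congr1 Dc cub.
  rewrite (D0 hDc) !(DD hDc) !(DM hDc) Dcc Dct (Dn hDc) in H.
  have H' : (6%:R * l0 ^+ 2 + t) * Dc l0 + 1 = 0 by rewrite -H; ring.
  by apply/eqP => HD; move: H'; rewrite HD mul0r add0r => /eqP; rewrite oner_eq0.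
set T2 := fC (t / 2%:R).
set i2 := fC (2%:R^-1 : K).
set e := feps K.
have hi2 : i2 * 2%:R = 1 by rewrite /i2 -fCn -fCM mulVf.
have he : e = 2%:R * (i2 * e).
  by transitivity ((i2 * 2%:R) * e); [rewrite hi2 mul1r | ring].
have ht : fC t = 2%:R * T2.
  by rewrite /T2 fCM -/i2; transitivity (fC t * (i2 * 2%:R)); [rewrite hi2 mulr1 | ring].
set h := fC c - i2 * e.
have hcc : fC c = h + i2 * e by rewrite /h subrK.
pose D := fun f : fps K => e * fder Dt f.
have DsD : forall x y, D (x + y) = D x + D y.
  by move=> x y; rewrite /D (fderD hDt) mulrDr.
have DsM : forall x y, D (x * y) = D x * y + x * D y.
  by move=> x y; rewrite /D (fderM hDt); ring.
have Dlam : D lam = nu := E1.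
have Dnu : D nu = 2%:R * (lam * (lam * lam)) + (2%:R * T2 * lam + (h + i2 * e)).
  by rewrite /D E2 ht hcc; ring.
have fderi2 : fder Dt i2 = 0.
  by rewrite /i2 (fderC hDt) (Dinv0 hDt two_nz (Dn hDt 2)).
have DT2 : D T2 = i2 * e.
  rewrite /D /T2 (fderC hDt) (DM hDt) Dtt (Dinv0 hDt two_nz (Dn hDt 2)) mulr0 addr0 mul1r.
  by rewrite -/i2 mulrC.
have Dh : D h = 0.
  rewrite /D /h (fderB hDt) (fderM hDt) (fderC hDt) Dtc fderi2 /e (fdereps hDt).
  by rewrite fC0; ring.
have DE2 : D (i2 * e) = 0.
  by rewrite /D (fderM hDt) fderi2 /e (fdereps hDt); ring.
set Q := nu - lam * lam - T2.
have Q0E : Q 0%N = - (l0 * l0) - t / 2%:R.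
  by rewrite /Q !subfE mulf0E nu0 sub0r l0E.
have cQ : c = 2%:R * l0 * (- (l0 * l0) - t / 2%:R).
  by rewrite hc; field; exact: two_nz.
have Q0nz : Q 0%N != 0.
  by rewrite Q0E; apply: contra c0 => /eqP HQ; rewrite cQ HQ mulr0.
set q := finv Q.
have hq : q * (nu - lam * lam - T2) = 1 by rewrite mulrC finvK.
have q0E : q 0%N = (Q 0%N)^-1 by [].
have h0E : h 0%N = c by rewrite /h subfE mulf0E (_ : e 0%N = 0) // mulr0 subr0.
have hBL : BLam t c lam nu = - lam + h * q by [].
have hBN : BNu t c lam nu = - nu + 2%:R * ((h * q) * lam) - (h * q) * (h * q).
  by rewrite -fCn.
have hB1 := B1 DsD DsM Dlam Dnu DT2 Dh hq.
have hB2 := B2 DsD DsM Dlam Dnu DT2 Dh hq.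
have Dshift : forall f, D (fshift Dc f) = fshift Dc (D f).
  move=> f; rewrite /D (fshiftM hDc ch0) /e (fshifteps hDc).
  by rewrite (fshift_fder hDt comm ch0).
set L := fshift Dc lam.
set M := fshift Dc nu.
have DL : D L = M by rewrite /L Dshift Dlam.
have fT2 : fshift Dc T2 = T2.
  by rewrite /T2 fshiftC0 // (DM hDc) Dct mul0r add0r (Dinv0 hDc two_nz (Dn hDc 2)) mulr0.
have fhE : fshift Dc (h + i2 * e) = h - i2 * e.
  rewrite /h subrK (fshiftCc hDc Dcc) -/e [in LHS]he; ring.
have DMM : D M = 2%:R * (L * (L * L)) + (2%:R * T2 * L + (h - i2 * e)).
  rewrite /M Dshift Dnu (fshiftD hDc) (fshiftD hDc) fhE.
  by rewrite !(fshiftM hDc ch0) !(fshiftn hDc) fT2.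
set Lam := - lam + h * q.
set N := - nu + 2%:R * ((h * q) * lam) - (h * q) * (h * q).
set d := Lam - L.
set X := 2%:R * (Lam * Lam + Lam * L + L * L) + 2%:R * T2.
have hDD : D (D d) = d * X.
  rewrite /d (DsB DsD) hB1 DL (DsB DsD) hB2 DMM /X /Lam. ring.
have Lam0 : Lam 0%N = l0.
  rewrite /Lam addfE oppfE mulf0E h0E q0E l0E.
  by rewrite cQ -Q0E -mulrA mulfV // mulr1; ring.
have L0 : L 0%N = l0 by rewrite /L fshift0E l0E.
have X0 : X 0%N = 6%:R * l0 ^+ 2 + t.
  rewrite /X addfE !mulf0E !addfE !mulf0E Lam0 L0 !natf0E /T2 /=.
  by field; exact: two_nz.
have d0 : d = 0.
  apply: (uniq0 (X := X)); first by rewrite X0.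
    by rewrite /d subfE Lam0 L0 subrr.
  by move=> n IH; rewrite -hDD; apply: (DD0 hDt).
have LamL : Lam = L by apply/eqP; rewrite -subr_eq0; apply/eqP.
have NM : N = M.
  have H : D d = N - M by rewrite /d (DsB DsD) hB1 DL.
  by apply/eqP; rewrite -subr_eq0 -H d0 (Ds0 DsD).
split; [split|].
- by apply: feq_of_eq; rewrite hBL; exact: LamL.
- by apply: feq_of_eq; rewrite hBN; exact: NM.
set s0 := S 0%N in S0sq *.
have s0E : S 0%N = s0 by [].
clearbody s0.
have ER' : S * S + D S = 6%:R * (lam * lam) + 2%:R * T2 by rewrite -ht; exact: ER.
have DS : D S = 6%:R * (lam * lam) + 2%:R * T2 - S * S.
  by apply: (addrI (S * S)); rewrite ER'; ring.
set F := 1 + h * ((S - 2%:R * lam) * (q * q)).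
have hQQ : (nu - lam * lam - T2) * (nu - lam * lam - T2) * (q * q) = 1.
  by transitivity ((q * (nu - lam * lam - T2)) * (q * (nu - lam * lam - T2)));
    [ring | rewrite hq mulr1].
have hFarg : Farg t c lam nu S = F.
  by rewrite /Farg (finv_uniq hQQ) fC1 fCn.
set Qz := - (l0 * l0) - t / 2%:R.
have Qznz : Qz != 0 by rewrite /Qz -Q0E.
have F0 : F 0%N = 1 + c * ((s0 - 2%:R * l0) * (Qz^-1 * Qz^-1)).
  rewrite /F addfE !mulf0E subfE mulf0E natf0E h0E q0E Q0E s0E l0E.
  by [].
have F0nz : F 0%N != 0.
  rewrite F0; apply/eqP => HF.
  have QQi : Qz * Qz^-1 = 1 by rewrite mulfV.
  have HF2 : Qz * Qz + c * (s0 - 2%:R * l0) = 0.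
    transitivity (Qz * Qz * (1 + c * ((s0 - 2%:R * l0) * (Qz^-1 * Qz^-1))) -
       c * (s0 - 2%:R * l0) * (Qz * Qz^-1 - 1) * (Qz * Qz^-1 + 1)); first by ring.
    by rewrite HF QQi; ring.
  have HF3 : Qz * (Qz + 2%:R * l0 * (s0 - 2%:R * l0)) = 0.
    by rewrite -HF2 [in RHS]cQ -/Qz; ring.
  move/eqP: HF3; rewrite mulf_eq0 (negbTE Qznz) /= => /eqP HF4.
  have H2Q : 2%:R * Qz = - (2%:R * (l0 * l0)) - t by rewrite /Qz; field; exact: two_nz.
  have ht0 : t = s0 ^+ 2 - 6%:R * l0 ^+ 2 by rewrite S0sq; ring.
  have Hsq : (s0 - 2%:R * l0) ^+ 2 = 0.
    transitivity (- (2%:R * (Qz + 2%:R * l0 * (s0 - 2%:R * l0)))); last by rewrite HF4; ring.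
    transitivity (- (2%:R * Qz) - 4%:R * l0 * (s0 - 2%:R * l0)); last by ring.
    by rewrite H2Q [in RHS]ht0; ring.
  move/eqP: Hsq; rewrite expf_eq0 /= subr_eq0 => /eqP Hs.
  move/eqP: Qznz; apply; apply: (mulfI two_nz); rewrite mulr0 H2Q ht0 Hs; ring.
set Fi := finv F.
have hF : F * Fi = 1 by rewrite finvK.
have DFi : D Fi = - (Fi * Fi) * D F.
  have h0 : D F * Fi + F * D Fi = 0 by rewrite -DsM hF -fC1 /D (fderC hDt) (D1 hDt) fC0 mulr0.
  apply/eqP; rewrite -subr_eq0; apply/eqP.
  transitivity ((D F * Fi + F * D Fi) * Fi - D Fi * (F * Fi - 1)); first by ring.
  by rewrite h0 hF; ring.
have hK := Kid DsD DsM Dlam Dnu DT2 Dh hq DS.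
rewrite -/Lam -/F in hK.
set U := S + D F * Fi.
set V := fshift Dc S.
have RU : U * U + D U = 6%:R * (Lam * Lam) + 2%:R * T2.
  rewrite /U DsD DsM DFi.
  apply/eqP; rewrite -subr_eq0; apply/eqP.
  transitivity (Fi * (2%:R * S * D F + D (D F) - 6%:R * (Lam * Lam - lam * lam) * F)
     + 6%:R * (Lam * Lam - lam * lam) * (F * Fi - 1)); first by rewrite DS; ring.
  by rewrite hK hF; ring.
have RV : V * V + D V = 6%:R * (L * L) + 2%:R * T2.
  have := congr1 (fshift Dc) ER'.
  rewrite (fshiftD hDc) -Dshift !(fshiftD hDc) !(fshiftM hDc ch0) !(fshiftn hDc) fT2.
  by [].
set d2 := U - V.
set X2 := U + V.
have hd2 : d2 * X2 + D d2 = 0.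
  transitivity ((U * U + D U) - (V * V + D V)); first by rewrite /d2 /X2 (DsB DsD); ring.
  by rewrite RU RV LamL subrr.
have U0 : U 0%N = s0 by rewrite /U addfE mulf0E /D epsE0 mul0r addr0 s0E.
have V0 : V 0%N = s0 by rewrite /V fshift0E s0E.
have s0nz : s0 != 0.
  apply: contra Delta_nz => /eqP s00; rewrite -S0sq s00; apply/eqP; ring.
have UV : U = V.
  have : d2 = 0.
    apply: (uniq0 (X := X2)).
    - rewrite /X2 addfE U0 V0 (_ : s0 + s0 = 2%:R * s0); last by ring.
      by rewrite mulf_neq0.
    - by rewrite /d2 subfE U0 V0 subrr.
    move=> n IH; have -> : d2 * X2 = - D d2 by apply/eqP; rewrite -subr_eq0 opprK hd2.
    by rewrite oppfE; apply/eqP; rewrite oppr_eq0; apply/eqP; exact: (D0' hDt IH).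
  by move/eqP; rewrite subr_eq0 => /eqP.
apply: feq_of_eq.
rewrite /fdlog hFarg fsubE foppE !fmulE' -/e -/Fi -/V -UV /U /D.
ring.
Qed.
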